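(* Let $G=(V,E)$ be a finite bipartite graph and fix an edge $e=\{b,w\}$ with $b$ black and $w$ white. Let $G^e=G-e$ (delete the edge only) and $G'=G-\{b,w\}$ (delete both vertices and all incident edges). Then: (i) the channels in $\mathcal{C}_B(G)$ not containing $b$ are exactly the channels in $\mathcal{C}_B(G^e)$ not containing $b$; (ii) if there is a channel $B\in\mathcal{C}_B(G^e)$ with $b\in B$, then there is a bijection $\mathcal{C}_B(G)\to\mathcal{C}_B(G')$ which maps every channel not containing $b$ to itself.
   Context: A channel of a graph $H$ is a vertex set $C$ such that every vertex of $H$ is adjacent to an even number of vertices of $C$ (the empty set included). For a bipartite graph with black/white coloring, $\mathcal{C}_B(H)$ denotes the set of channels of $H$ consisting only of black vertices. *)

(* Defs.v *)
From mathcomp Require Import all_boot.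
Set Implicit Arguments. Unset Strict Implicit. Unset Printing Implicit Defensive.

(* A finite graph H is given by a vertex set V : {set T} (T a finType)
   together with an adjacency relation r : rel T (only its restriction to V
   matters). *)

Definition simple_graph (T : finType) (V : {set T}) (r : rel T) : Prop :=
  (forall x y, r x y = r y x) /\ (forall x, ~~ r x x) /\
  (forall x y, r x y -> (x \in V) && (y \in V)).

(* Bipartite with colouring col (true = black, false = white). *)
Definition bipartite_col (T : finType) (r : rel T) (col : T -> bool) : Prop :=
  forall x y, r x y -> col x != col y.

Definition channel (T : finType) (V : {set T}) (r : rel T) (C : {set T}) : bool :=
  (C \subset V) && [forall v in V, ~~ odd #|[set u in C | r v u]|].

Definition chanB (T : finType) (V : {set T}) (r : rel T) (col : T -> bool)
  : {set {set T}} :=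
  [set C : {set T} | channel V r C && [forall u in C, col u]].

Definition del_edge (T : finType) (r : rel T) (b w : T) : rel T :=
  fun x y => r x y && ~~ (((x == b) && (y == w)) || ((x == w) && (y == b))).

Definition del_verts_set (T : finType) (V : {set T}) (b w : T) : {set T} :=
  V :\ b :\ w.
Definition del_verts_rel (T : finType) (r : rel T) (b w : T) : rel T :=
  fun x y => r x y && (x != b) && (x != w) && (y != b) && (y != w).

(* Main.v *)
Require Import Defs.
From mathcomp Require Import all_boot.
Set Implicit Arguments. Unset Strict Implicit. Unset Printing Implicit Defensive.

Section Aux.
Variable T : finType.

Definition sd (X Y : {set T}) : {set T} := (X :|: Y) :\: (X :&: Y).

Lemma card_sd (X Y : {set T}) : #|sd X Y| + (#|X :&: Y|).*2 = #|X| + #|Y|.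
Proof.
rewrite /sd cardsD.
have -> : (X :|: Y) :&: (X :&: Y) = X :&: Y.
  by apply/setP=> x; rewrite !inE; case: (x \in X); case: (x \in Y).
rewrite -cardsUI -addnn addnA subnK //.
by apply: subset_leq_card; apply/subsetP=> x; rewrite !inE => /andP[->].
Qed.

Lemma odd_sd (X Y : {set T}) : odd #|sd X Y| = odd #|X| (+) odd #|Y|.
Proof. by rewrite -oddD -card_sd oddD odd_double addbF. Qed.

Lemma sdK (X Y : {set T}) : sd (sd X Y) Y = X.
Proof.
by apply/setP=> x; rewrite /sd !inE; case: (x \in X); case: (x \in Y).
Qed.

Lemma N_sd (X Y : {set T}) (p : pred T) :
  [set u in sd X Y | p u] = sd [set u in X | p u] [set u in Y | p u].
Proof.
by apply/setP=> x; rewrite /sd !inE; case: (x \in X); case: (x \in Y); case: (p x).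
Qed.

End Aux.

Theorem lemma5p4 (T : finType) (V : {set T}) (r : rel T) (col : T -> bool)
  (b w : T) :
  simple_graph V r -> bipartite_col r col ->
  r b w -> col b -> ~~ col w ->
  (* (i) *)
  (forall C : {set T}, b \notin C ->
     (C \in chanB V r col) = (C \in chanB V (del_edge r b w) col)) /\
  (* (ii) *)
  ((exists2 B : {set T}, B \in chanB V (del_edge r b w) col & b \in B) ->
   exists f : {set T} -> {set T},
     [/\ (forall C, C \in chanB V r col ->
            f C \in chanB (del_verts_set V b w) (del_verts_rel r b w) col),
         {in chanB V r col &, injective f},
         (forall D, D \in chanB (del_verts_set V b w) (del_verts_rel r b w) col ->
            exists2 C, C \in chanB V r col & f C = D) &
         (forall C, C \in chanB V r col -> b \notin C -> f C = C)]).
Proof.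
move=> [rsym [rirr rV]] bip rbw cb cw.
have bV : b \in V by case/andP: (rV _ _ rbw).
have wV : w \in V by case/andP: (rV _ _ rbw).
have bw : b != w by apply/eqP=> E; move: cw; rewrite -E cb.
pose par (X : {set T}) v := odd #|[set u in X | r v u]|.
have blk_w : forall X : {set T}, [forall u in X, col u] -> w \notin X.
  by move=> X /forall_inP H; apply/negP=> /H; rewrite (negbTE cw).
have blk_b : forall X : {set T}, [forall u in X, col u] -> par X b = false.
  move=> X /forall_inP H; rewrite /par.
  have -> : [set u in X | r b u] = set0.
    apply/setP=> u; rewrite !inE; apply/negP=> /andP[/H cu rbu].
    by move: (bip _ _ rbu); rewrite cu cb.
  by rewrite cards0.
have de : forall X : {set T}, [forall u in X, col u] -> forall v, v != w ->
    [set u in X | del_edge r b w v u] = [set u in X | r v u].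
  move=> X Xb v vw; apply/setP=> u; rewrite !inE /del_edge.
  case uX: (u \in X) => //=.
  have uw : u != w by apply/negP=> /eqP E; move: (blk_w _ Xb); rewrite -E uX.
  by rewrite (negbTE uw) (negbTE vw) /= !andbF andbT.
have dv : forall X : {set T}, b \notin X -> w \notin X -> forall v, v != b -> v != w ->
    [set u in X | del_verts_rel r b w v u] = [set u in X | r v u].
  move=> X nb nw v vb vw; apply/setP=> u; rewrite !inE /del_verts_rel vb vw.
  case uX: (u \in X) => //=.
  have ub : u != b by apply/negP=> /eqP E; move: nb; rewrite -E uX.
  have uw : u != w by apply/negP=> /eqP E; move: nw; rewrite -E uX.
  by rewrite ub uw !andbT.
have chG : forall C : {set T}, reflect [/\ C \subset V, [forall u in C, col u] &
                                forall v, v \in V -> ~~ par C v]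
                             (C \in chanB V r col).
  move=> C; rewrite !inE /channel; apply: (iffP idP).
    by case/andP=> /andP[sCV /forall_inP H] Cb; split=> // v /H.
  by case=> sCV Cb H; rewrite sCV Cb andbT; apply/forall_inP.
have chG' : forall D : {set T}, reflect [/\ D \subset V, b \notin D, [forall u in D, col u] &
                                forall v, v \in V -> v != b -> v != w -> ~~ par D v]
                       (D \in chanB (del_verts_set V b w) (del_verts_rel r b w) col).
  move=> D; rewrite !inE /channel /del_verts_set; apply: (iffP idP).
    case/andP=> /andP[sDV /forall_inP H] Db.
    have nb : b \notin D by apply/negP=> /(subsetP sDV); rewrite !inE eqxx andbF.
    have nw : w \notin D by apply/negP=> /(subsetP sDV); rewrite !inE eqxx.
    split=> //.
      by apply/subsetP=> x /(subsetP sDV); rewrite !inE => /and3P[].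
    move=> v vV vb vw; rewrite /par -(dv _ nb nw _ vb vw); apply: H.
    by rewrite !inE vV vb vw.
  case=> sDV nb Db H; rewrite Db andbT.
  have nw := blk_w _ Db.
  apply/andP; split.
    apply/subsetP=> x xD; rewrite !inE (subsetP sDV _ xD) andbT.
    apply/andP; split; apply/negP=> /eqP E.
      by move: nw; rewrite -E xD.
    by move: nb; rewrite -E xD.
  apply/forall_inP=> v; rewrite !inE => /and3P[vw vb vV].
  by rewrite (dv _ nb nw _ vb vw); apply: H.
split.
  move=> C nbC; rewrite !inE /channel.
  case: (boolP [forall u in C, col u]) => Cb; last by rewrite !andbF.
  rewrite !andbT; congr (_ && _); apply: eq_forallb => v.
  case: (eqVneq v w) => [->|vw]; last by rewrite (de _ Cb _ vw).
  suff -> : [set u in C | del_edge r b w w u] = [set u in C | r w u] by [].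
  apply/setP=> u; rewrite !inE /del_edge.
  case uC: (u \in C) => //=.
  have ub : u != b by apply/negP=> /eqP E; move: nbC; rewrite -E uC.
  have uw : u != w by apply/negP=> /eqP E; move: (blk_w _ Cb); rewrite -E uC.
  by rewrite (negbTE ub) (negbTE uw) !andbF andbT.
case=> B; rewrite !inE /channel => /andP[/andP[sBV /forall_inP HB] Bb] bB.
have parB : forall v, v \in V -> v != w -> par B v = false.
  by move=> v vV vw; rewrite /par -(de _ Bb _ vw); apply/negbTE/HB.
have parBw : par B w = true.
  have := HB _ wV; rewrite /par.
  have -> : [set u in B | del_edge r b w w u] = [set u in B | r w u] :\ b.
    apply/setP=> u; rewrite !inE /del_edge eqxx (eq_sym w b) (negbTE bw) /=.
    by case: (u \in B); rewrite ?andbF //= andbC.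
  rewrite [#|[set u in B | r w u]|](cardsD1 b) !inE bB /= rsym rbw /=.
  by case: (odd _).
have parsd : forall (X Y : {set T}) v, par (sd X Y) v = par X v (+) par Y v.
  by move=> X Y v; rewrite /par N_sd odd_sd.
have sdV : forall X : {set T}, X \subset V -> sd X B \subset V.
  move=> X sXV; apply/subsetP=> x; rewrite /sd !inE => /andP[_ /orP[]].
    exact: (subsetP sXV).
  exact: (subsetP sBV).
have sdb : forall X : {set T}, [forall u in X, col u] -> [forall u in sd X B, col u].
  move=> X /forall_inP HX; apply/forall_inP=> x; rewrite /sd !inE => /andP[_ /orP[]].
    exact: HX.
  by move/forall_inP: Bb; apply.
exists (fun C : {set T} => if b \in C then sd C B else C); split.
- move=> C /chG [sCV Cb HC]; apply/chG'.
  case: ifP => bC.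
    split; [exact: sdV | by rewrite /sd !inE bC bB | exact: sdb |].
    move=> v vV vb vw; rewrite parsd (parB _ vV vw) addbF; exact: HC.
  by split=> //; [rewrite bC | move=> v vV _ _; exact: HC].
- move=> C1 C2 /chG [s1 b1 H1] /chG [s2 b2 H2].
  have key : forall X Y : {set T}, X \in chanB V r col -> Y \in chanB V r col ->
      b \in X -> b \notin Y -> sd X B <> Y.
    move=> X Y /chG [_ _ HX] /chG [_ _ HY] _ _ E.
    have := HY _ wV; rewrite -E parsd parBw addbT.
    by have := HX _ wV; case: (par X w).
  have c1 : C1 \in chanB V r col by apply/chG.
  have c2 : C2 \in chanB V r col by apply/chG.
  case: ifP => bC1; case: ifP => bC2.
  + by move=> E; rewrite -(sdK C1 B) E sdK.
  + by move=> E; exfalso; apply: (key C1 C2) => //; rewrite bC2.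
  + by move=> E; exfalso; apply: (key C2 C1) => //; rewrite bC1.
  + by [].
- move=> D /chG' [sDV nb Db HD].
  case: (boolP (par D w)) => pDw.
    exists (sd D B).
      apply/chG; split; [exact: sdV | exact: sdb |].
      move=> v vV; rewrite parsd.
      case: (eqVneq v w) => [->|vw]; first by rewrite pDw parBw.
      rewrite (parB _ vV vw) addbF.
      case: (eqVneq v b) => [->|vb]; first by rewrite blk_b.
      exact: HD.
    have -> : b \in sd D B by rewrite /sd !inE bB (negbTE nb).
    exact: sdK.
  exists D; last by rewrite (negbTE nb).
  apply/chG; split=> // v vV.
  case: (eqVneq v w) => [->|vw] //.
  case: (eqVneq v b) => [->|vb]; first by rewrite blk_b.
  exact: HD.
- by move=> C _ nb; rewrite (negbTE nb).
Qed.
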